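(* For every $n\ge3$, the line graph of the $n$-cube $Q_n$ does not admit perfect state transfer between any two distinct vertices with respect to its adjacency matrix.
   Context: The $n$-cube has vertex set $\{0,1\}^n$, two vertices adjacent iff they differ in exactly one coordinate. The line graph of $X$ has vertex set $E(X)$, edges adjacent iff they share an endpoint. Perfect state transfer from vertex $x$ to vertex $y$ with Hamiltonian $M$: $e^{-\mathrm{i}\tau M}\mathbf e_x=\eta\mathbf e_y$ for some $\tau>0$, $|\eta|=1$. *)

(* Defs.v *)
From HB Require Import structures.
From mathcomp Require Import all_boot all_order all_algebra.
From mathcomp Require Import all_classical all_reals topology normedtype sequences.
From mathcomp Require Import complex.
Set Implicit Arguments. Unset Strict Implicit. Unset Printing Implicit Defensive.
Import Order.TTheory GRing.Theory Num.Theory.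
Import numFieldNormedType.Exports.
Local Open Scope ring_scope.

Definition cube (n : nat) := {ffun 'I_n -> bool}.

Definition cube_adj (n : nat) (u v : cube n) : bool :=
  #|[set i : 'I_n | u i != v i]| == 1%N.

Definition is_cube_edge (n : nat) (e : {set cube n}) : bool :=
  [exists u : cube n, exists v : cube n, cube_adj u v && (e == [set u; v])].

Notation edge n := {e : {set cube n} | is_cube_edge e}.

Definition line_adj (n : nat) (e f : edge n) : bool :=
  (e != f) && (val e :&: val f != finset.set0).

Definition lineQ_adjmx (R : rcfType) (n : nat) : 'M[R[i]]_#|{: edge n}| :=
  \matrix_(a, b) (line_adj (enum_val a : edge n) (enum_val b : edge n))%:R.

Local Open Scope classical_set_scope.
Local Open Scope ring_scope.

Definition ccvg (R : realType) (u : nat -> R[i]) (l : R[i]) : Prop :=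
  ((fun N => complex.Re (u N)) @ \oo --> complex.Re l) /\
  ((fun N => complex.Im (u N)) @ \oo --> complex.Im l).

(** Partial sums of the exponential series of -i tau M  (note: Complex 0 (-tau) = -i*tau). *)
Definition expmx_partial (R : realType) (m : nat) (M : 'M[R[i]]_m) (tau : R)
    (N : nat) : 'M[R[i]]_m :=
  \sum_(k < N) (((complex.Complex 0 (- tau)) ^+ k) / (k`!)%:R) *: M ^+ k.

Definition is_expmx (R : realType) (m : nat) (M : 'M[R[i]]_m) (tau : R)
    (U : 'M[R[i]]_m) : Prop :=
  forall a b : 'I_m, ccvg (fun N => expmx_partial M tau N a b) (U a b).

Definition PST (R : realType) (m : nat) (M : 'M[R[i]]_m) (x y : 'I_m) : Prop :=
  exists tau : R, 0 < tau /\
  exists eta : R[i], `|eta| = 1 /\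
  exists U : 'M[R[i]]_m, is_expmx M tau U /\
  U *m delta_mx x (0 : 'I_1) = eta *: delta_mx y (0 : 'I_1).

(* Main.v *)
Require Import Defs.
From HB Require Import structures.
From mathcomp Require Import all_boot all_order all_algebra.
From mathcomp Require Import all_classical all_reals topology normedtype sequences.
From mathcomp Require Import complex trigo.
From mathcomp Require Import ring.
Import Order.TTheory GRing.Theory Num.Theory.
Import numFieldNormedType.Exports.
Local Open Scope ring_scope.
Local Open Scope classical_set_scope.
Local Open Scope ring_scope.
Local Open Scope complex_scope.

Section Ana.
Context {R : realType}.
Lemma ReD (a b : R[i]) : complex.Re (a + b) = complex.Re a + complex.Re b.
Proof. by case: a; case: b. Qed.
Lemma ReN (a : R[i]) : complex.Re (- a) = - complex.Re a.
Proof. by case: a. Qed.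
Lemma ImD (a b : R[i]) : complex.Im (a + b) = complex.Im a + complex.Im b.
Proof. by case: a; case: b. Qed.
Lemma ImN (a : R[i]) : complex.Im (- a) = - complex.Im a.
Proof. by case: a. Qed.
Lemma ReMr (a : R[i]) (r : R) : complex.Re (a * r%:C) = complex.Re a * r.
Proof. case: a => a b /=. simpc. done. Qed.
Lemma ImMr (a : R[i]) (r : R) : complex.Im (a * r%:C) = complex.Im a * r.
Proof. case: a => a b /=. simpc. done. Qed.
Lemma Re_sum (I : Type) (r : seq I) (P : pred I) (f : I -> R[i]) :
  complex.Re (\sum_(k <- r | P k) f k) = \sum_(k <- r | P k) complex.Re (f k).
Proof. exact: (big_morph _ ReD (erefl _)). Qed.
Lemma Im_sum (I : Type) (r : seq I) (P : pred I) (f : I -> R[i]) :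
  complex.Im (\sum_(k <- r | P k) f k) = \sum_(k <- r | P k) complex.Im (f k).
Proof. exact: (big_morph _ ImD (erefl _)). Qed.

Lemma powiC (t : R) k : (Complex 0 t)^+k =
  Complex ((~~odd k)%:R * (-1)^+k./2 * t^+k) ((odd k)%:R * (-1)^+k.-1./2 * t^+k).
Proof.
elim: k => [|k IH].
  by apply/eqP; rewrite eq_complex /= !expr0 !mulr1 !eqxx.
rewrite exprS IH; simpc. apply/eqP; rewrite eq_complex /=.
have [m km] : exists m, k = (odd k + m.*2)%N by exists k./2; rewrite odd_double_half.
case: (boolP (odd k)) => ok.
  rewrite ok /= in km; rewrite km.
  rewrite /= uphalf_double half_double !exprS !mul1r; apply/andP; split; apply/eqP; ring.
rewrite (negbTE ok) /= in km; rewrite km.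
rewrite /= uphalf_double half_double !exprS !mul1r !mul0r !mulr0 oppr0 eqxx /=.
by apply/eqP; ring.
Qed.

Definition sN (tau : R) (N : nat) : R[i] :=
  \sum_(k < N) (Complex 0 (- tau)) ^+ k / (k`!)%:R * (-2) ^+ k.

Lemma sN_term (tau : R) k : (Complex 0 (- tau)) ^+ k / (k`!)%:R * (-2) ^+ k =
   (Complex 0 (2 * tau)) ^+ k * ((k`!%:R)^-1)%:C.
Proof.
rewrite mulrAC -exprMn rmorphV ?unitfE ?pnatr_eq0 -?lt0n ?fact_gt0 // rmorph_nat.
congr (_ ^+ _ * _); simpc; congr Complex; ring.
Qed.

Lemma Re_sN tau : (fun N => complex.Re (sN tau N)) = series (cos_coeff (2 * tau)).
Proof.
apply/funext => N; rewrite seriesEord /= /sN Re_sum; apply: eq_bigr => k _.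
by rewrite sN_term ReMr powiC /=.
Qed.
Lemma Im_sN tau : (fun N => complex.Im (sN tau N)) = series (sin_coeff (2 * tau)).
Proof.
apply/funext => N; rewrite seriesEord /= /sN Im_sum; apply: eq_bigr => k _.
by rewrite sN_term ImMr powiC /=.
Qed.

Lemma sN_not0 tau :
  (fun N => complex.Re (sN tau N)) @ \oo --> (0 : R) ->
  (fun N => complex.Im (sN tau N)) @ \oo --> (0 : R) -> False.
Proof.
rewrite Re_sN Im_sN => hr hi.
have hc : series (cos_coeff (2 * tau)) @ \oo --> cos (2 * tau).
  by rewrite unlock; exact: is_cvg_series_cos_coeff.
have hs : series (sin_coeff (2 * tau)) @ \oo --> sin (2 * tau).
  by rewrite unlock; exact: is_cvg_series_sin_coeff.
have c0 : cos (2 * tau) = 0 by first [exact: (cvg_unique (@Rhausdorff R) hc hr) | exact: (cvg_unique (@norm_hausdorff _ R^o) hc hr) | exact: (cvg_unique _ hc hr)].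
have s0 : sin (2 * tau) = 0 by first [exact: (cvg_unique (@Rhausdorff R) hs hi) | exact: (cvg_unique (@norm_hausdorff _ R^o) hs hi) | exact: (cvg_unique _ hs hi)].
have := cos2Dsin2 (2 * tau); rewrite c0 s0 expr0n /= addr0 => /eqP.
by rewrite eq_sym oner_eq0.
Qed.
End Ana.

Section M.
Context {R : realType}.

Lemma sum4 {m} (r1 r2 r3 r4 : 'I_m) (f : 'I_m -> R[i]) :
  \sum_b ((b==r1)%:R - (b==r3)%:R + (b==r2)%:R - (b==r4)%:R) * f b =
  f r1 - f r3 + f r2 - f r4.
Proof.
have h : forall r, \sum_b (b == r)%:R * f b = f r.
  move=> r; rewrite (bigD1 r) //= eqxx mul1r big1 ?addr0 // => b /negbTE ->.
  by rewrite mul0r.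
under eq_bigr do rewrite !(mulrBl, mulrDl).
by rewrite sumrB big_split sumrB /= !h.
Qed.

Lemma Wpow {m} {A : 'M[R[i]]_m} {W : 'I_m -> R[i]} :
  (forall c, \sum_b W b * A b c = -2 * W c) ->
  forall k c, \sum_b W b * (A ^+ k) b c = (-2) ^+ k * W c.
Proof.
move=> hA; elim=> [|k IH] c.
  rewrite expr0 mul1r (bigD1 c) //= mxE eqxx mulr1n mulr1 big1 ?addr0 // => b nbc.
  by rewrite mxE (negbTE nbc) mulr0n mulr0.
rewrite exprSr -mulmxE.
under eq_bigr do rewrite mxE mulr_sumr.
rewrite exchange_big /=.
under eq_bigr do (under eq_bigr do rewrite mulrA; rewrite -mulr_suml IH -mulrA).
by rewrite -mulr_sumr hA exprSr mulrA.
Qed.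

Lemma cvg4 {u1 u2 u3 u4 : nat -> R} {l1 l2 l3 l4 : R} :
  u1 @ \oo --> l1 -> u2 @ \oo --> l2 -> u3 @ \oo --> l3 -> u4 @ \oo --> l4 ->
  (fun N => u1 N - u2 N + u3 N - u4 N) @ \oo --> l1 - l2 + l3 - l4.
Proof.
move=> h1 h2 h3 h4.
exact: (@cvgB R R^o _ _ _ _ _ _ _ (@cvgD R R^o _ _ _ _ _ _ _ (@cvgB R R^o _ _ _ _ _ _ _ h1 h2) h3) h4).
Qed.

Lemma noPST_vec m (A : 'M[R[i]]_m) (x y r1 r2 r3 r4 : 'I_m) :
  (forall c, \sum_b ((b==r1)%:R - (b==r3)%:R + (b==r2)%:R - (b==r4)%:R) * A b c =
      -2 * ((c==r1)%:R - (c==r3)%:R + (c==r2)%:R - (c==r4)%:R)) ->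
  ((x==r1)%:R - (x==r3)%:R + (x==r2)%:R - (x==r4)%:R = 1 :> R[i]) ->
  ((y==r1)%:R - (y==r3)%:R + (y==r2)%:R - (y==r4)%:R = 0 :> R[i]) ->
  ~ PST A x y.
Proof.
move=> hA hx hy [tau [_ [eta [_ [U [hU hUx]]]]]].
set P := expmx_partial A tau.
have hPs : forall N, P N r1 x - P N r3 x + P N r2 x - P N r4 x = sN tau N.
  move=> N; rewrite -(sum4 r1 r2 r3 r4 (fun b => P N b x)).
  rewrite /P /expmx_partial. under eq_bigr do rewrite summxE mulr_sumr.
  rewrite exchange_big /sN; apply: eq_bigr => k _ /=.
  under eq_bigr do rewrite mxE mulrCA.
  by rewrite -mulr_sumr (Wpow hA) hx mulr1.
have hU0 : U r1 x - U r3 x + U r2 x - U r4 x = 0.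
  rewrite -(sum4 r1 r2 r3 r4 (fun b => U b x)).
  have e : forall b, U b x = eta * (b == y)%:R.
    move=> b; have := congr1 (fun M : 'M[R[i]]_(m,1) => M b (0 : 'I_1)) hUx; rewrite -colE !mxE eqxx andbT /=.
    by [].
  under eq_bigr do rewrite e.
  rewrite (bigD1 y) //= eqxx mulr1 big1 ?addr0; first by rewrite hy mul0r.
  by move=> b /negbTE ->; rewrite mulr0 mulr0.
have hRe : (fun N => complex.Re (sN tau N)) @ \oo --> (0 : R).
  have -> : (fun N => complex.Re (sN tau N)) = (fun N => complex.Re (P N r1 x) -
     complex.Re (P N r3 x) + complex.Re (P N r2 x) - complex.Re (P N r4 x)).
    by apply/funext => N; rewrite -hPs !(ReD, ReN).
  have <- : complex.Re (U r1 x) - complex.Re (U r3 x) + complex.Re (U r2 x)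
     - complex.Re (U r4 x) = 0 by rewrite -!(ReD, ReN) hU0.
  exact: (cvg4 (hU r1 x).1 (hU r3 x).1 (hU r2 x).1 (hU r4 x).1).
have hIm : (fun N => complex.Im (sN tau N)) @ \oo --> (0 : R).
  have -> : (fun N => complex.Im (sN tau N)) = (fun N => complex.Im (P N r1 x) -
     complex.Im (P N r3 x) + complex.Im (P N r2 x) - complex.Im (P N r4 x)).
    by apply/funext => N; rewrite -hPs !(ImD, ImN).
  have <- : complex.Im (U r1 x) - complex.Im (U r3 x) + complex.Im (U r2 x)
     - complex.Im (U r4 x) = 0 by rewrite -!(ImD, ImN) hU0.
  exact: (cvg4 (hU r1 x).2 (hU r3 x).2 (hU r2 x).2 (hU r4 x).2).
exact: (sN_not0 _ hRe hIm).
Qed.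
End M.


Local Close Scope classical_set_scope.
Local Close Scope complex_scope.
Lemma card2I (T : finType) (a b : T) (F : {set T}) : a != b ->
  #|[set a; b] :&: F| = ((a \in F) + (b \in F))%N.
Proof.
move=> ab; have ba : b != a by rewrite eq_sym.
have key : forall S : {set T}, (forall z, (z \in S) = ((z == a) && (a \in F)) || ((z == b) && (b \in F))) -> #|[set a; b] :&: F| = #|S|.
  move=> S hS; apply: eq_card => z; rewrite hS !inE.
  case: (boolP (z == a)) => [/eqP->|za]; rewrite ?eqxx ?(negbTE ba) ?(negbTE ab) ?orbF /= //.
  by case: (boolP (z == b)) => [/eqP->|zb] //=.
case ha: (a \in F); case hb: (b \in F).
- by rewrite (key [set a; b]) ?cards2 ?ab // => z; rewrite !inE ha hb ?andbT ?andbF ?orbF.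
- by rewrite (key [set a]) ?cards1 // => z; rewrite !inE ha hb ?andbT ?andbF ?orbF.
- by rewrite (key [set b]) ?cards1 // => z; rewrite !inE ha hb ?andbT ?andbF ?orbF.
- by rewrite (key finset.set0) ?cards0 // => z; rewrite !inE ha hb ?andbT ?andbF ?orbF.
Qed.

Section Comb.
Context {n : nat}.

Definition flip (z : cube n) (t : 'I_n) : cube n :=
  [ffun s => if s == t then ~~ z s else z s].

Lemma flip_at z t : flip z t t = ~~ z t.
Proof. by rewrite ffunE eqxx. Qed.
Lemma flip_ne z t s : s != t -> flip z t s = z s.
Proof. by rewrite ffunE => /negbTE ->. Qed.
Lemma flip_neq z t : (flip z t == z) = false.
Proof. apply/negbTE/negP => /eqP /ffunP /(_ t); rewrite flip_at; by case: (z t). Qed.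
Lemma flip_neq' z t : (z == flip z t) = false.
Proof. by rewrite eq_sym flip_neq. Qed.
Lemma flipC z s t : flip (flip z s) t = flip (flip z t) s.
Proof.
apply/ffunP => r; rewrite !ffunE.
by case: (r == t); case: (r == s).
Qed.

Lemma flip_adj z t : cube_adj z (flip z t).
Proof.
rewrite /cube_adj; apply/eqP; have -> : [set s | z s != flip z t s] = [set t].
  apply/setP => s; rewrite !inE ffunE.
  by case: (s =P t) => [->|_]; [case: (z t)|rewrite eqxx].
by rewrite cards1.
Qed.

Lemma edge_flip z t : is_cube_edge [set z; flip z t].
Proof.
by apply/existsP; exists z; apply/existsP; exists (flip z t); rewrite flip_adj eqxx.
Qed.

Definition sqedge z t : edge n := exist _ [set z; flip z t] (edge_flip z t).

Lemma edge_decomp (e : edge n) : exists u i, val e = [set u; flip u i].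
Proof.
have := valP e; case/existsP => u /existsP [v /andP [hadj /eqP he]].
move: hadj; rewrite /cube_adj => /cards1P [i hi].
exists u, i; rewrite he; congr [set _; _].
apply/ffunP => s; rewrite ffunE; move/setP: hi => /(_ s); rewrite !inE.
case: (s =P i) => [->|_] /=; first by case: (u i); case: (v i).
by move/negbT; rewrite negbK => /eqP.
Qed.

Lemma card_edge (e : edge n) : #|val e| = 2%N.
Proof. by have [u [i ->]] := edge_decomp e; rewrite cards2 flip_neq'. Qed.

Lemma line_adj_card (e f : edge n) :
  #|val e :&: val f| = (line_adj e f + 2 * (e == f))%N.
Proof.
rewrite /line_adj; case: (eqVneq e f) => [->|nef] /=.
  by rewrite finset.setIid card_edge.
have h1 : (#|val e :&: val f| <= 1)%N.
  rewrite leqNgt; apply/negP => h2.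
  have he := (subset_leqif_cards (finset.subsetIl (val e) (val f))).2.
  have hf := (subset_leqif_cards (finset.subsetIr (val e) (val f))).2.
  have ce : #|val e :&: val f| == #|val e| by rewrite eqn_leq subset_leq_card ?finset.subsetIl // card_edge.
  have cf : #|val e :&: val f| == #|val f| by rewrite eqn_leq subset_leq_card ?finset.subsetIr // card_edge.
  rewrite he in ce; rewrite hf in cf.
  have : val e = val f by rewrite -{1}(eqP ce) (eqP cf).
  by move/val_inj; apply/eqP.
rewrite muln0 addn0 -cards_eq0.
by move: h1; case: #|_| => [|[|]].
Qed.


Lemma sq_eigen (K : comRingType) u i j (x f : edge n) :
  val x = [set u; flip u i] ->
  (line_adj x f)%:R - (line_adj (sqedge u j) f)%:R + (line_adj (sqedge (flip u j) i) f)%:R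
    - (line_adj (sqedge (flip u i) j) f)%:R
  = -2 * ((f == x)%:R - (f == sqedge u j)%:R + (f == sqedge (flip u j) i)%:R
    - (f == sqedge (flip u i) j)%:R) :> K.
Proof.
move=> hx.
have hc : forall e : edge n,
    (line_adj e f)%:R = (#|val e :&: val f|)%:R - 2 * (f == e)%:R :> K.
  by move=> e; rewrite line_adj_card natrD natrM eq_sym addrK.
rewrite !hc hx /= !card2I ?flip_neq' // (flipC u i j) !natrD.
ring.
Qed.
End Comb.

Lemma three_ords n (i : 'I_n) : (3 <= n)%N -> exists j k : 'I_n, [/\ j != i, k != i & j != k].
Proof.
move=> n3.
have h0 : (0 < n)%N by apply: leq_trans n3.
have h1 : (1 < n)%N by apply: leq_trans n3.
have h2 : (2 < n)%N by [].
pose a := Ordinal h0; pose b := Ordinal h1; pose c := Ordinal h2.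
case: (eqVneq i a) => [->|ia]; first by exists b, c.
case: (eqVneq i b) => [->|ib]; first by exists a, c.
by exists a, b; split; rewrite // eq_sym.
Qed.

Section Final.
Context {R : realType} {n : nat}.

Lemma diffJ {e f : edge n} {j : 'I_n} {b : bool} : (forall p, p \in val e -> p j = b) ->
  (exists2 p, p \in val f & p j != b) -> e != f.
Proof. move=> he [p pf pj]; apply/negP => /eqP ef; subst; by rewrite (he p pf) eqxx in pj. Qed.

Lemma sq_allJ (u : cube n) j (z : cube n) t : z j = u j -> t != j ->
  forall p, p \in val (sqedge z t) -> p j = u j.
Proof.
move=> hz tj p; rewrite /= !inE => /orP [/eqP->|/eqP->] //.
by rewrite flip_ne // eq_sym.
Qed.

Lemma square_noPST (x y : edge n) u i j : val x = [set u; flip u i] -> j != i -> y != x ->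
  y != sqedge u j -> y != sqedge (flip u j) i -> y != sqedge (flip u i) j ->
  ~ PST (lineQ_adjmx R n) (enum_rank x) (enum_rank y).
Proof.
move=> hx ji yx y3 y2 y4.
have E : forall (c : 'I_#|{: edge n}|) e, (c == enum_rank e) = (enum_val c == e).
  by move=> c e; rewrite -{1}(enum_valK c) (inj_eq enum_rank_inj).
have hxJ : forall p, p \in val x -> p j = u j.
  by move=> p; rewrite hx !inE => /orP [/eqP->|/eqP->] //; rewrite flip_ne.
have x3 : x != sqedge u j.
  by apply: (diffJ hxJ); exists (flip u j); rewrite /= ?inE ?eqxx ?orbT // flip_at; case: (u j).
have x2 : x != sqedge (flip u j) i.
  by apply: (diffJ hxJ); exists (flip u j); rewrite /= ?inE ?eqxx ?orbT // flip_at; case: (u j).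
have x4 : x != sqedge (flip u i) j.
  apply: (diffJ hxJ); exists (flip (flip u i) j); rewrite /= ?inE ?eqxx ?orbT //.
  by rewrite flip_at flip_ne //; case: (u j).
apply: (noPST_vec _ _ _ _ (enum_rank x) (enum_rank (sqedge (flip u j) i))
   (enum_rank (sqedge u j)) (enum_rank (sqedge (flip u i) j))).
- move=> c; rewrite sum4 /lineQ_adjmx !mxE !enum_rankK !E; exact: sq_eigen.
- by rewrite !(inj_eq enum_rank_inj) eqxx (negbTE x3) (negbTE x2) (negbTE x4) !subr0 addr0.
- by rewrite !(inj_eq enum_rank_inj) (negbTE yx) (negbTE y3) (negbTE y2) (negbTE y4) !subr0 addr0.
Qed.

End Final.

Theorem mainTheorem15 (R : realType) (n : nat) :
  (3 <= n)%N ->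
  forall x y : edge n, x != y ->
  ~ PST (lineQ_adjmx R n) (enum_rank x) (enum_rank y).
Proof.
move=> n3 x y xy.
have [u [i hx]] := edge_decomp x.
have [j [k [ji ki jk]]] := @three_ords _ i n3.
have yx : y != x by rewrite eq_sym.
case: (boolP [|| y == sqedge u j, y == sqedge (flip u j) i | y == sqedge (flip u i) j]) => H;
  last first.
  move: H; rewrite !negb_or => /and3P [y3 y2 y4].
  exact: (@square_noPST R n x y u i j hx ji yx y3 y2 y4).
have exj : exists2 p, p \in val y & p j != u j.
  case/or3P: H => /eqP ->.
  - by exists (flip u j); rewrite /= ?inE ?eqxx ?orbT // flip_at; case: (u j).
  - by exists (flip u j); rewrite /= ?inE ?eqxx ?orbT // flip_at; case: (u j).
  - exists (flip (flip u i) j); rewrite /= ?inE ?eqxx ?orbT //.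
    by rewrite flip_at flip_ne //; case: (u j).
have kj : k != j by rewrite eq_sym.
have ij : i != j by rewrite eq_sym.
have y3 : y != sqedge u k.
  by rewrite eq_sym; apply: (diffJ _ exj); apply: sq_allJ.
have y2 : y != sqedge (flip u k) i.
  by rewrite eq_sym; apply: (diffJ _ exj); apply: sq_allJ => //; rewrite flip_ne.
have y4 : y != sqedge (flip u i) k.
  by rewrite eq_sym; apply: (diffJ _ exj); apply: sq_allJ => //; rewrite flip_ne.
exact: (@square_noPST R n x y u i k hx ki yx y3 y2 y4).
Qed.
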